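(* Let $H$ be a subgroup of a group $G$, let $W$ be a subset of a finitely generated group $F$ whose commutator subgroup $F'$ has infinite index in $F$, and let $W\ni w\mapsto g_w\in G$ be an arbitrary map. Then the number of homomorphisms $\varphi: F\to G$ such that $\varphi(w)\in Hg_wH$ for all $w\in W$ is divisible by $|H|$.
   Context: Groups need not be finite; divisibility is understood in the sense of cardinal arithmetic: an infinite cardinal is divisible by every nonzero cardinal not exceeding it. *)

(* Defs.v *)
From Stdlib Require Import List.
From Stdlib Require Import ssreflect ssrfun.

Record group := Group {
  gcar :> Type;
  gmul : gcar -> gcar -> gcar;
  gone : gcar;
  ginv : gcar -> gcar;
  gmulA : forall x y z, gmul x (gmul y z) = gmul (gmul x y) z;
  gmul1l : forall x, gmul gone x = x;
  gmulVl : forall x, gmul (ginv x) x = gone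
}.

Arguments gmul {g}.
Arguments gone {g}.
Arguments ginv {g}.

Definition is_subgroup {G : group} (H : G -> Prop) : Prop :=
  H gone /\ (forall x y, H x -> H y -> H (gmul x y)) /\ (forall x, H x -> H (ginv x)).

Definition is_hom {F G : group} (phi : F -> G) : Prop :=
  forall x y, phi (gmul x y) = gmul (phi x) (phi y).

Definition in_double_coset {G : group} (H : G -> Prop) (g x : G) : Prop :=
  exists h1 h2, H h1 /\ H h2 /\ x = gmul (gmul h1 g) h2.

Definition generated {G : group} (S : G -> Prop) (x : G) : Prop :=
  forall K : G -> Prop, is_subgroup K -> (forall s, S s -> K s) -> K x.

Definition finitely_generated (G : group) : Prop :=
  exists s : list G, forall x : G, generated (fun y => In y s) x.

Definition commutator {G : group} (a b : G) : G :=
  gmul (gmul (gmul (ginv a) (ginv b)) a) b.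

Definition derived (G : group) : G -> Prop :=
  generated (fun c => exists a b : G, c = commutator a b).

Definition finite_index {G : group} (K : G -> Prop) : Prop :=
  exists s : list G, forall x : G, exists y, In y s /\ K (gmul (ginv y) x).

Definition infinite_index {G : group} (K : G -> Prop) : Prop := ~ finite_index K.

(* cardinal divisibility |A| divides |B|:  |B| = |A| * |C| for some cardinal |C| *)
Definition card_divides (A B : Type) : Prop :=
  exists (C : Type) (f : A * C -> B), bijective f.

(* Main.v *)
Require Import Defs.
From Stdlib Require Import List ZArith Lia Classical.
From Stdlib Require Import ssreflect ssrfun.
From Stdlib Require Import ClassicalEpsilon IndefiniteDescription ProofIrrelevance FunctionalExtensionality PropExtensionality.

Local Notation "x ** y" := (gmul x y) (at level 40, left associativity).
Arguments gmulA {g}.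
Arguments gmul1l {g}.
Arguments gmulVl {g}.

Section GroupBasics.
Context {G : group}.
Implicit Types x y w : G.

Lemma mulVr x : x ** ginv x = gone.
Proof.
  rewrite -[x ** ginv x]gmul1l -{1}(gmulVl (x ** ginv x)).
  rewrite -!gmulA (gmulA (ginv x) x) gmulVl gmul1l gmulVl //.
Qed.
Lemma mulr1 x : x ** gone = x.
Proof. by rewrite -(gmulVl x) gmulA mulVr gmul1l. Qed.
Lemma mulKl x y : ginv x ** (x ** y) = y.
Proof. by rewrite gmulA gmulVl gmul1l. Qed.
Lemma mulKr x y : x ** (ginv x ** y) = y.
Proof. by rewrite gmulA mulVr gmul1l. Qed.
Lemma mulKVr x y : x ** y ** ginv y = x.
Proof. by rewrite -gmulA mulVr mulr1. Qed.
Lemma mulKVl x y : x ** ginv y ** y = x.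
Proof. by rewrite -gmulA gmulVl mulr1. Qed.
Lemma mul_cancl x y w : x ** y = x ** w -> y = w.
Proof. by move=> E; rewrite -(mulKl x y) E mulKl. Qed.
Lemma mul_cancr x y w : y ** x = w ** x -> y = w.
Proof. by move=> E; rewrite -(mulKVr y x) E mulKVr. Qed.
Lemma invK x : ginv (ginv x) = x.
Proof. by apply: (mul_cancl (ginv x)); rewrite mulVr gmulVl. Qed.
Lemma inv1 : ginv (@gone G) = gone.
Proof. by rewrite -{2}(gmulVl gone) mulr1. Qed.
Lemma invM x y : ginv (x ** y) = ginv y ** ginv x.
Proof.
  apply: (mul_cancl (x ** y)); rewrite mulVr -gmulA (gmulA y) mulVr gmul1l mulVr //.
Qed.
Lemma inv_uniq x y : x ** y = gone -> y = ginv x.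
Proof. by move=> E; apply: (mul_cancl x); rewrite E mulVr. Qed.

Fixpoint npow x (n : nat) : G := match n with O => gone | S n => npow x n ** x end.
Definition gpow x (z : Z) : G :=
  if (0 <=? z)%Z then npow x (Z.to_nat z) else npow (ginv x) (Z.to_nat (- z)).

Lemma gpow0 x : gpow x 0 = gone. Proof. by []. Qed.

Lemma gpow_succ x z : gpow x (Z.succ z) = gpow x z ** x.
Proof.
  rewrite /gpow.
  case: (Z.leb_spec 0 z) => Hz.
  - have -> : (0 <=? Z.succ z)%Z = true by apply/Z.leb_le; lia.
    have -> : Z.to_nat (Z.succ z) = S (Z.to_nat z) by lia.
    by [].
  - case: (Z.leb_spec 0 (Z.succ z)) => Hz'.
    + have -> : z = (-1)%Z by lia.
      by rewrite /= gmul1l gmulVl.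
    + have -> : Z.to_nat (- z) = S (Z.to_nat (- Z.succ z)) by lia.
      by rewrite /= mulKVl.
Qed.

Lemma gpow_pred x z : gpow x (Z.pred z) = gpow x z ** ginv x.
Proof. by rewrite -{2}(Z.succ_pred z) gpow_succ mulKVr. Qed.

Lemma gpow_add x a b : gpow x (a + b) = gpow x a ** gpow x b.
Proof.
  elim/Z.peano_ind: b.
  - by rewrite Z.add_0_r gpow0 mulr1.
  - by move=> b IH; rewrite Z.add_succ_r !gpow_succ IH gmulA.
  - by move=> b IH; rewrite Z.add_pred_r !gpow_pred IH gmulA.
Qed.

Lemma gpow1 x : gpow x 1 = x.
Proof. by rewrite /gpow /= gmul1l. Qed.

Lemma gpow_succ_l x z : gpow x (Z.succ z) = x ** gpow x z.
Proof. by rewrite -Z.add_1_l gpow_add gpow1. Qed.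

Lemma gpow_opp x z : gpow x (- z) = ginv (gpow x z).
Proof. apply: inv_uniq. by rewrite -gpow_add Z.add_opp_diag_r. Qed.

Lemma gpow_mulcomm x y : x ** y = y ** x -> forall z, gpow x z ** y = y ** gpow x z.
Proof.
  move=> C; elim/Z.peano_ind.
  - by rewrite gpow0 gmul1l mulr1.
  - by move=> z IH; rewrite gpow_succ -gmulA C gmulA IH gmulA.
  - move=> z IH; rewrite gpow_pred -gmulA.
    have C' : ginv x ** y = y ** ginv x.
      by apply: (mul_cancl x); rewrite mulKr gmulA C mulKVr.
    by rewrite C' gmulA IH gmulA.
Qed.
End GroupBasics.


Section Homs.
Context {F G : group}.
Variable (phi : F -> G).
Hypothesis Hphi : is_hom phi.
Lemma hom1 : phi gone = gone.
Proof. apply: (mul_cancl (phi gone)); by rewrite -Hphi !mulr1. Qed.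
Lemma homV x : phi (ginv x) = ginv (phi x).
Proof. apply: inv_uniq; by rewrite -Hphi mulVr hom1. Qed.
Lemma hom_gpow x z : phi (gpow x z) = gpow (phi x) z.
Proof.
  elim/Z.peano_ind: z.
  - by rewrite !gpow0 hom1.
  - by move=> z IH; rewrite !gpow_succ Hphi IH.
  - by move=> z IH; rewrite !gpow_pred Hphi IH homV.
Qed.
End Homs.

Definition conjg {G : group} (h x : G) : G := gmul (gmul h x) (ginv h).

Lemma conj_hom {G : group} (h : G) : is_hom (conjg h).
Proof. move=> x y; rewrite /conjg !gmulA mulKVl //. Qed.

Lemma gpow_conj {G : group} (h x : G) z : gpow (conjg h x) z = conjg h (gpow x z).
Proof. by rewrite -(hom_gpow _ (conj_hom h)). Qed.

Lemma conjgM {G : group} (a b x : G) : conjg (a ** b) x = conjg a (conjg b x).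
Proof. by rewrite /conjg invM !gmulA. Qed.
Lemma conjg1 {G : group} (x : G) : conjg gone x = x.
Proof. by rewrite /conjg inv1 gmul1l mulr1. Qed.
Lemma conjgK {G : group} (a x : G) : conjg (ginv a) (conjg a x) = x.
Proof. by rewrite -conjgM gmulVl conjg1. Qed.
Lemma conjgKV {G : group} (a x : G) : conjg a (conjg (ginv a) x) = x.
Proof. by rewrite -conjgM mulVr conjg1. Qed.
Lemma conjg_comm {G : group} (a x : G) : a ** x = x ** a -> conjg a x = x.
Proof. by move=> E; rewrite /conjg E mulKVr. Qed.

Section ZHom.
Context {F : group} {eps : F -> Z} (Heps : forall x y, eps (x ** y) = (eps x + eps y)%Z).
Lemma eps1 : eps gone = 0%Z.
Proof. have := Heps gone gone. rewrite gmul1l. lia. Qed.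
Lemma epsV x : eps (ginv x) = (- eps x)%Z.
Proof. have := Heps (ginv x) x. rewrite gmulVl eps1. lia. Qed.
Lemma eps_gpow x z : eps (gpow x z) = (z * eps x)%Z.
Proof.
  elim/Z.peano_ind: z.
  - by rewrite gpow0 eps1.
  - move=> z IH; rewrite gpow_succ Heps IH; lia.
  - move=> z IH; rewrite gpow_pred Heps IH epsV; lia.
Qed.
Lemma eps_conj a x : eps (conjg a x) = eps x.
Proof. rewrite /conjg !Heps epsV; lia. Qed.
End ZHom.

Section Main.
Context {F G : group} (H : G -> Prop) (HH : is_subgroup H)
  (W : F -> Prop) (g : {w : F | W w} -> G)
  (eps : F -> Z) (Heps : forall x y, eps (x ** y) = (eps x + eps y)%Z)
  (t : F) (Ht : eps t = 1%Z).

Lemma H1 : H gone. Proof. by case: HH. Qed.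
Lemma HM {x y} : H x -> H y -> H (x ** y). Proof. by case: HH => _ [M _]; apply: M. Qed.
Lemma HV {x} : H x -> H (ginv x). Proof. by case: HH => _ [_ V]; apply: V. Qed.
Lemma HVV {x} : H (ginv x) -> H x. Proof. by move/HV; rewrite invK. Qed.

Definition lc (x y : G) := H (ginv x ** y).
Lemma lc_refl x : lc x x. Proof. by rewrite /lc gmulVl; apply: H1. Qed.
Lemma lc_sym {x y} : lc x y -> lc y x.
Proof. by rewrite /lc => /HV; rewrite invM invK. Qed.
Lemma lc_trans {x y z} : lc x y -> lc y z -> lc x z.
Proof. rewrite /lc => A B; have := HM A B; by rewrite -gmulA mulKr. Qed.
Lemma lc_mull z x y : lc x y -> lc (z ** x) (z ** y).
Proof. by rewrite /lc invM -gmulA mulKl. Qed.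
Lemma lc_mullK {z x y} : lc (z ** x) (z ** y) -> lc x y.
Proof. by move/(lc_mull (ginv z)); rewrite !mulKl. Qed.
Lemma lc_mulH x h : H h -> lc x (x ** h).
Proof. by rewrite /lc mulKl. Qed.
Lemma lc_mulHV x h : H h -> lc (x ** ginv h) x.
Proof. move=> Hh; rewrite /lc invM invK -gmulA gmulVl mulr1 //. Qed.
Lemma lc_inv_left c z : lc (c ** z) z -> lc (ginv c ** z) z.
Proof.
  rewrite /lc => Hc; have := HV Hc.
  by rewrite invM invK invM invK gmulA.
Qed.

Definition dcond (phi : F -> G) :=
  forall w : {w : F | W w}, in_double_coset H (g w) (phi (proj1_sig w)).

Lemma dcond_lc {phi psi} : dcond phi -> (forall f, lc (phi f) (psi f)) -> dcond psi.
Proof.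
  move=> D L w; case: (D w) => h1 [h2 [A [B E]]].
  exists h1, (h2 ** (ginv (phi (proj1_sig w)) ** psi (proj1_sig w))); split => //; split.
  - by apply: HM => //; apply: L.
  - by rewrite gmulA -E mulKr.
Qed.

Lemma dcond_conj {phi h} : H h -> dcond phi -> dcond (fun f => conjg h (phi f)).
Proof.
  move=> Hh D w; case: (D w) => h1 [h2 [A [B E]]].
  exists (h ** h1), (h2 ** ginv h); split; [by apply: HM|split; first by apply: HM => //; apply: HV].
  by rewrite /conjg E !gmulA.
Qed.

Definition kpart (f : F) := f ** gpow t (- eps f).
Lemma eps_kpart f : eps (kpart f) = 0%Z.
Proof. rewrite /kpart Heps (eps_gpow Heps) Ht; lia. Qed.
Lemma kpart_decomp f : kpart f ** gpow t (eps f) = f.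
Proof. by rewrite /kpart -gmulA -gpow_add Z.add_opp_diag_l gpow0 mulr1. Qed.
Lemma kpart_K k : eps k = 0%Z -> kpart k = k.
Proof. by move=> E; rewrite /kpart E gpow0 mulr1. Qed.
Lemma kpart_mul f h : kpart (f ** h) = kpart f ** conjg (gpow t (eps f)) (kpart h).
Proof.
  rewrite /kpart /conjg Heps -gpow_opp !gmulA -(gmulA _ (gpow t (- eps f)) (gpow t (eps f))).
  rewrite -gpow_add Z.add_opp_diag_l gpow0 mulr1 -!gmulA -!gpow_add.
  by rewrite Z.opp_add_distr Z.add_comm.
Qed.

Definition Qs (phi : F -> G) (q : G) :=
  H q /\ (forall k, eps k = 0%Z -> q ** phi k = phi k ** q) /\
  forall f, lc (q ** phi f) (phi f).

Lemma Qs1 phi : Qs phi gone.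
Proof.
  split; [exact: H1|split]; first by move=> k _; rewrite gmul1l mulr1.
  by move=> f; rewrite gmul1l; apply: lc_refl.
Qed.
Lemma QsM {phi a b} : Qs phi a -> Qs phi b -> Qs phi (a ** b).
Proof.
  move=> [Ha [Ca La]] [Hb [Cb Lb]]; split; [exact: HM|split].
  - by move=> k Ek; rewrite -gmulA Cb // !gmulA Ca.
  - move=> f; apply: lc_trans (La f); rewrite -gmulA; apply: lc_mull; exact: Lb.
Qed.
Lemma QsV {phi a} : Qs phi a -> Qs phi (ginv a).
Proof.
  move=> [Ha [Ca La]]; split; [exact: HV|split].
  - move=> k Ek; apply: (mul_cancl a); rewrite mulKr gmulA Ca // mulKVr //.
  - move=> f; apply: lc_inv_left; exact: La.
Qed.

Definition tw (phi : F -> G) (c : G) (f : F) :=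
  phi (kpart f) ** gpow (phi t ** c) (eps f).

Section Tw.
Context {phi : F -> G} (Hphi : is_hom phi) {c : G}.
Hypothesis Cc : forall k, eps k = 0%Z -> c ** phi k = phi k ** c.

Lemma hom_conj x y : phi (conjg x y) = conjg (phi x) (phi y).
Proof. by rewrite /conjg !Hphi homV. Qed.

Lemma conj_step k : eps k = 0%Z ->
  conjg (phi t ** c) (phi k) = phi (conjg t k).
Proof. move=> Ek; by rewrite conjgM (conjg_comm c) ?Cc // -hom_conj. Qed.

Lemma conj_pow n : forall k, eps k = 0%Z ->
  conjg (gpow (phi t ** c) n) (phi k) = phi (conjg (gpow t n) k).
Proof.
  elim/Z.peano_ind: n.
  - by move=> k _; rewrite !gpow0 !conjg1.
  - move=> n IH k Ek; rewrite !gpow_succ conjgM conj_step // IH ?(eps_conj Heps) //.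
    by rewrite conjgM.
  - move=> n IH k Ek; rewrite !gpow_pred conjgM.
    have E : conjg (ginv (phi t ** c)) (phi k) = phi (conjg (ginv t) k).
      rewrite -{1}(conjgKV t k) -conj_step ?conjgK // (eps_conj Heps) //.
    by rewrite E IH ?(eps_conj Heps) // conjgM.
Qed.

Lemma tw_hom : is_hom (tw phi c).
Proof.
  move=> x y; rewrite /tw kpart_mul Hphi -conj_pow ?eps_kpart // Heps gpow_add /conjg.
  by rewrite !gmulA mulKVl.
Qed.

Lemma gpow_pred_l (x : G) n : gpow x (Z.pred n) = ginv x ** gpow x n.
Proof. by rewrite -{2}(Z.succ_pred n) gpow_succ_l mulKl. Qed.

Lemma pow_lc (a : G) : (forall m, lc (c ** gpow a m) (gpow a m)) ->
  forall n, lc (gpow (a ** c) n) (gpow a n).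
Proof.
  move=> Hm; elim/Z.peano_ind.
  - rewrite !gpow0; exact: lc_refl.
  - move=> n IH; rewrite !gpow_succ_l -gmulA; apply: lc_mull.
    apply: lc_trans (Hm n); exact: lc_mull.
  - move=> n IH; rewrite !gpow_pred_l invM -gmulA.
    apply: (@lc_trans _ (ginv c ** (ginv a ** gpow a n))).
      by apply: lc_mull; apply: lc_mull; exact: IH.
    rewrite -gpow_pred_l; apply: lc_inv_left; exact: Hm.
Qed.

Lemma tw_lc : (forall f, lc (c ** phi f) (phi f)) -> forall f, lc (tw phi c f) (phi f).
Proof.
  move=> Hf f; rewrite /tw.
  have -> : phi f = phi (kpart f) ** gpow (phi t) (eps f)
    by rewrite -hom_gpow // -Hphi kpart_decomp.
  apply: lc_mull; apply: pow_lc => m; rewrite -hom_gpow //; exact: Hf.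
Qed.

Lemma tw_K k : eps k = 0%Z -> tw phi c k = phi k.
Proof. by move=> Ek; rewrite /tw kpart_K // Ek gpow0 mulr1. Qed.

Lemma tw_t : tw phi c t = phi t ** c.
Proof.
  rewrite /tw Ht gpow1 /kpart Ht.
  have -> : t ** gpow t (Z.opp 1) = gone by rewrite gpow_opp gpow1 mulVr.
  by rewrite hom1 // gmul1l.
Qed.
End Tw.

Definition Sset := {phi : F -> G | is_hom phi /\ dcond phi}.

Definition E (phi psi : F -> G) := exists h : G, H h /\ (forall k, eps k = 0%Z -> psi k = conjg h (phi k)) /\ forall f, lc (psi f) (h ** phi f).

Lemma E_refl phi : E phi phi.
Proof.
  exists gone; split; [exact: H1|split]; first by move=> k _; rewrite conjg1.
  move=> f; rewrite gmul1l; exact: lc_refl.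
Qed.
Lemma E_sym {phi psi} : E phi psi -> E psi phi.
Proof.
  move=> [h [Hh [K L]]]; exists (ginv h); split; [exact: HV|split].
  - by move=> k Ek; rewrite K // conjgK.
  - move=> f; apply: lc_sym; apply: (@lc_mullK h); rewrite mulKr; exact: L.
Qed.
Lemma E_trans {a b c} : E a b -> E b c -> E a c.
Proof.
  move=> [h [Hh [K L]]] [h' [Hh' [K' L']]]; exists (h' ** h); split; [exact: HM|split].
  - by move=> k Ek; rewrite K' // K // conjgM.
  - move=> f; apply: lc_trans (L' f) _; rewrite -gmulA; apply: lc_mull; exact: L.
Qed.

Section Beta.
Variable phi0 : F -> G.
Hypothesis Hphi0 : is_hom phi0.
Hypothesis Dphi0 : dcond phi0.

Definition sigma (h : G) : G :=
  epsilon (inhabits gone) (fun x => H x /\ Qs phi0 (ginv x ** h)).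

Lemma sigma_spec {h} : H h -> H (sigma h) /\ Qs phi0 (ginv (sigma h) ** h).
Proof.
  move=> Hh; apply: (epsilon_spec (inhabits gone) (fun x => H x /\ Qs phi0 (ginv x ** h))).
  exists h; split => //; rewrite gmulVl; exact: Qs1.
Qed.

Lemma sigma_eq {h h'} : Qs phi0 (ginv h ** h') -> sigma h = sigma h'.
Proof.
  move=> Q; rewrite /sigma; f_equal; apply: functional_extensionality => x.
  apply: propositional_extensionality; split => -[Hx Qx]; split => //.
  - by have := QsM Qx Q; rewrite -gmulA mulKr.
  - have := QsM Qx (QsV Q); by rewrite invM invK -gmulA mulKr.
Qed.

Definition beta (h : G) (f : F) : G :=
  conjg (sigma h) (tw phi0 (ginv (sigma h) ** h) f).


Lemma conj_eq_comm (a b y : G) : conjg a y = conjg b y -> (ginv a ** b) ** y = y ** (ginv a ** b).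
Proof.
  rewrite /conjg => E0.
  have E1 : b ** y = a ** y ** ginv a ** b by rewrite -(mulKVl (b ** y) b) -E0.
  by rewrite -gmulA E1 !gmulA gmulVl gmul1l.
Qed.

Lemma beta_hom {h} : H h -> is_hom (beta h).
Proof.
  move=> Hh; case: (sigma_spec Hh) => Hs [_ [Cc _]] x y.
  by rewrite /beta (tw_hom Hphi0 Cc) conj_hom.
Qed.

Lemma beta_lc {h} : H h -> forall f, lc (beta h f) (sigma h ** phi0 f).
Proof.
  move=> Hh f; case: (sigma_spec Hh) => Hs [_ [Cc Lc]].
  rewrite /beta /conjg; apply: lc_trans; first by apply: lc_mulHV.
  by apply: lc_mull; apply: tw_lc.
Qed.

Lemma beta_K {h} : H h -> forall k, eps k = 0%Z -> beta h k = conjg (sigma h) (phi0 k).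
Proof. by move=> Hh k Ek; rewrite /beta tw_K. Qed.

Lemma beta_dcond {h} : H h -> dcond (beta h).
Proof.
  move=> Hh; case: (sigma_spec Hh) => Hs [_ [Cc Lc]].
  rewrite /beta; apply: (dcond_conj Hs); apply: (dcond_lc Dphi0) => f; apply: lc_sym.
  by apply: tw_lc.
Qed.

Lemma beta_E {h} : H h -> E phi0 (beta h).
Proof.
  move=> Hh; exists (sigma h); split; first by case: (sigma_spec Hh).
  split; [exact: beta_K | exact: beta_lc].
Qed.

Lemma beta_inj h1 h2 : H h1 -> H h2 -> (forall f, beta h1 f = beta h2 f) -> h1 = h2.
Proof.
  move=> H1' H2' Eb.
  case: (sigma_spec H1') => Hs1 Q1; case: (sigma_spec H2') => Hs2 Q2.
  have Q12 : Qs phi0 (ginv (sigma h1) ** sigma h2).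
  { split; [by apply: HM => //; apply: HV | split].
    - move=> k Ek; apply: conj_eq_comm; by rewrite -(beta_K H1') // -(beta_K H2').
    - move=> f; apply: lc_sym; apply: (@lc_mullK (sigma h1)); rewrite -gmulA mulKr.
      apply: (@lc_trans _ (beta h1 f)); first by apply: lc_sym; apply: (beta_lc H1').
      rewrite Eb; exact: beta_lc. }
  have Qh : Qs phi0 (ginv h1 ** h2).
    have := QsM (QsM (QsV Q1) Q12) Q2.
    by rewrite invM invK !gmulA mulKVr mulKVr.
  have Es := sigma_eq Qh.
  have := Eb t; rewrite /beta Es => /(f_equal (conjg (ginv (sigma h2)))).
  rewrite !conjgK !(tw_t Hphi0) => /mul_cancl /mul_cancl //.
Qed.

Lemma beta_surj psi : is_hom psi -> E phi0 psi -> exists h, H h /\ forall f, beta h f = psi f.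
Proof.
  move=> Hpsi [h [Hh [K L]]].
  case: (sigma_spec Hh); set s := sigma h => Hs Qq.
  set q := ginv s ** h in Qq.
  have Ehs : h = s ** q by rewrite /q mulKr.
  set psi' := fun f => conjg (ginv s) (psi f).
  have Hpsi' : is_hom psi'.
    by move=> x y; rewrite /psi' Hpsi conj_hom.
  have Kpsi' : forall k, eps k = 0%Z -> psi' k = phi0 k.
  { move=> k Ek; rewrite /psi' K // Ehs conjgM (conjg_comm q) ?conjgK //.
    by case: Qq => _ [C _]; apply: C. }
  have Lpsi' : forall f, lc (psi' f) (phi0 f).
    move=> f; case: Qq => _ [_ Lq].
    apply: (@lc_trans _ (ginv s ** psi f)).
      by rewrite /psi' /conjg invK; apply: lc_sym; apply: lc_mulH.
    apply: lc_trans (Lq f); rewrite /q -gmulA; apply: lc_mull; exact: L.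
  set c := ginv (phi0 t) ** psi' t.
  have Ept : psi' t = phi0 t ** c by rewrite /c mulKr.
  have Qc : Qs phi0 c.
  { split; [exact: (lc_sym (Lpsi' t)) | split].
    - move=> k Ek; apply: conj_eq_comm.
      have Ek' : eps (conjg t k) = 0%Z by rewrite (eps_conj Heps).
      by rewrite -(hom_conj Hphi0) -(Kpsi' _ Ek') (hom_conj Hpsi') (Kpsi' k Ek).
    - move=> f.
      have L1 := Lpsi' (t ** f); rewrite Hpsi' Hphi0 Ept -gmulA in L1.
      have L2 := lc_mullK L1.
      apply: lc_trans L2; apply: lc_mull; apply: lc_sym; exact: Lpsi'. }
  have Etw : forall f, psi' f = tw phi0 c f.
    move=> f; rewrite /tw -{1}(kpart_decomp f) Hpsi' (hom_gpow _ Hpsi') Ept.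
    by rewrite Kpsi' // eps_kpart.
  exists (s ** c); split; first by apply: HM => //; case: Qc.
  have Es : sigma h = sigma (s ** c).
    apply: sigma_eq; have := QsM (QsV Qq) Qc.
    by rewrite /q invM invK !gmulA.
  move=> f; rewrite /beta -Es -/s mulKl -Etw /psi' conjgKV //.
Qed.
End Beta.

Lemma sig_eq {A : Type} {P : A -> Prop} (x y : {a : A | P a}) :
  proj1_sig x = proj1_sig y -> x = y.
Proof.
  case: x => a pa; case: y => b pb /= E0; subst b.
  by rewrite (proof_irrelevance _ pa pb).
Qed.

Definition rep (x : Sset) : Sset :=
  epsilon (inhabits x) (fun y => E (proj1_sig x) (proj1_sig y)).

Lemma rep_E x : E (proj1_sig x) (proj1_sig (rep x)).
Proof.
  apply: (epsilon_spec (inhabits x) (fun y => E (proj1_sig x) (proj1_sig y))).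
  exists x; exact: E_refl.
Qed.

Lemma rep_eq x y : E (proj1_sig x) (proj1_sig y) -> rep x = rep y.
Proof.
  move=> Exy; rewrite /rep.
  have -> : (fun z : Sset => E (proj1_sig x) (proj1_sig z)) =
            (fun z : Sset => E (proj1_sig y) (proj1_sig z)).
  { apply: functional_extensionality => z; apply: propositional_extensionality; split.
    - by move=> Exz; apply: E_trans (E_sym Exy) Exz.
    - by move=> Eyz; apply: E_trans Exy Eyz. }
  by rewrite (proof_irrelevance _ (inhabits x) (inhabits y)).
Qed.

Lemma rep_rep x : rep (rep x) = rep x.
Proof. symmetry; apply: rep_eq; exact: rep_E. Qed.

Definition Cset := {x : Sset | rep x = x}.

Lemma beta_S (x : Sset) {h} : H h -> is_hom (beta (proj1_sig x) h) /\ dcond (beta (proj1_sig x) h).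
Proof.
  case: x => phi [Hp Dp] Hh /=; split; [exact: (beta_hom _ Hp Hh) | exact: (beta_dcond _ Hp Dp Hh)].
Qed.

Definition Theta (p : {h : G | H h} * Cset) : Sset :=
  exist _ (beta (proj1_sig (proj1_sig p.2)) (proj1_sig p.1))
    (beta_S (proj1_sig p.2) (proj2_sig p.1)).

Lemma Theta_inj p1 p2 : Theta p1 = Theta p2 -> p1 = p2.
Proof.
  case: p1 => [[h1 Hh1] [[phi1 [Hp1 Dp1]] R1]]; case: p2 => [[h2 Hh2] [[phi2 [Hp2 Dp2]] R2]].
  move=> /(f_equal (@proj1_sig _ _)) /= Eb.
  have E1 := beta_E _ Hp1 Hh1; have E2 := beta_E _ Hp2 Hh2.
  rewrite Eb in E1.
  have E12 := E_trans E1 (E_sym E2).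
  have Ex : (exist _ phi1 (conj Hp1 Dp1) : Sset) = exist _ phi2 (conj Hp2 Dp2).
    by rewrite -R1 -R2; apply: rep_eq.
  have Ephi : phi1 = phi2 by have := f_equal (@proj1_sig _ _) Ex.
  subst phi2.
  have Eh : h1 = h2.
    apply: (beta_inj _ Hp1 _ _ Hh1 Hh2) => f; by rewrite Eb.
  subst h2.
  f_equal; first by f_equal; apply: proof_irrelevance.
  apply: sig_eq => /=. exact: Ex.
Qed.

Lemma Theta_surj y : exists p, Theta p = y.
Proof.
  have Ey := E_sym (rep_E y).
  have [Hr Dr] := proj2_sig (rep y).
  have [Hy Dy] := proj2_sig y.
  case: (beta_surj _ Hr _ Hy Ey) => h [Hh Eb].
  exists (exist _ h Hh, exist (fun x => rep x = x) (rep y) (rep_rep y)).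
  apply: sig_eq => /=; apply: functional_extensionality; exact: Eb.
Qed.

Lemma card_div_main : card_divides {h : G | H h} Sset.
Proof.
  exists Cset, Theta.
  pose ginvT (y : Sset) := proj1_sig (constructive_indefinite_description _ (Theta_surj y)).
  exists ginvT.
  - move=> p; apply: Theta_inj; rewrite /ginvT.
    by case: (constructive_indefinite_description _ _).
  - move=> y; rewrite /ginvT.
    by case: (constructive_indefinite_description _ _).
Qed.
End Main.

Module LAmod.
Local Open Scope Z_scope.
Fixpoint dot (m : nat) (l v : nat -> Z) : Z :=
  match m with O => 0 | S m => dot m l v + l m * v m end.

Definition ev (i : nat) (j : nat) : Z := if Nat.eqb j i then 1 else 0.

Lemma dot_ext m l v w : (forall i, (i < m)%nat -> v i = w i) -> dot m l v = dot m l w.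
Proof.
  elim: m => [|m IH] E //=; rewrite IH ?E //; move=> *; apply: E; lia.
Qed.
Lemma dot_extl m l l' v : (forall i, (i < m)%nat -> l i = l' i) -> dot m l v = dot m l' v.
Proof.
  elim: m => [|m IH] E //=; rewrite IH ?E //; move=> *; apply: E; lia.
Qed.
Lemma dot_lin m l a b v w : dot m l (fun i => a * v i + b * w i) = a * dot m l v + b * dot m l w.
Proof. elim: m => [|m IH] /=; [ring | rewrite IH; ring]. Qed.

Lemma dot_zero m v : dot m (fun _ => 0) v = 0.
Proof. elim: m => [|m IH] /=; [ring | rewrite IH; ring]. Qed.
Lemma dot_scal m d l v : dot m (fun j => d * l j) v = d * dot m l v.
Proof. elim: m => [|m IH] /=; [ring | rewrite IH; ring]. Qed.

Section LAsec.
Definition closedR (m : nat) (R : (nat -> Z) -> Prop) :=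
  (forall v w, R v -> R w -> R (fun i => v i + w i)) /\
  (forall v z, R v -> R (fun i => z * v i)) /\
  (forall v w, (forall i, (i < m)%nat -> v i = w i) -> R v -> R w).
End LAsec.

Lemma LA m : forall R, closedR m R ->
  (exists N, 0 < N /\ forall i, (i < m)%nat -> R (fun j => N * ev i j)) \/
  (exists l, (exists i, (i < m)%nat /\ l i <> 0) /\ forall v, R v -> dot m l v = 0).
Proof.
  elim: m => [|m IH] R [Radd [Rscal Rext]].
  - left; exists 1; split; [lia | move=> i Hi; lia].
  - case: (classic (exists r0, R r0 /\ r0 m <> 0)) => [[r0 [Rr0 Hd]] | Hno]; last first.
    + right; exists (ev m); split; first by exists m; split; [lia | rewrite /ev Nat.eqb_refl; lia].
      move=> v Rv /=.
      have -> : dot m (ev m) v = 0.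
      { rewrite (dot_extl _ _ (fun _ => 0)) ?dot_zero //.
        move=> i Hi; rewrite /ev; case: (Nat.eqb_spec i m) => //; lia. }
      rewrite /ev Nat.eqb_refl.
      case: (Z.eq_dec (v m) 0) => [->|Hv]; first ring.
      exfalso; apply: Hno; by exists v.
    + set d := r0 m.
      pose R2 := fun u : nat -> Z => exists r, R r /\ forall i, (i < m)%nat -> u i = d * r i - r m * r0 i.
      have CR2 : closedR m R2.
      { split; [|split].
        - move=> v w [r [Rr Er]] [r' [Rr' Er']]; exists (fun i => r i + r' i); split; first exact: Radd.
          move=> i Hi; rewrite Er ?Er' //; ring.
        - move=> v z [r [Rr Er]]; exists (fun i => z * r i); split; first exact: Rscal.
          move=> i Hi; rewrite Er //; ring.
        - move=> v w E [r [Rr Er]]; exists r; split => // i Hi; rewrite -E // Er //. }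
      have Ru : forall r, R r -> R (fun i => d * r i - r m * r0 i).
      { move=> r Rr.
        have := Radd _ _ (Rscal _ d Rr) (Rscal _ (- r m) Rr0).
        apply: Rext => i _; ring. }
      case: (IH R2 CR2) => [[N [HN RN]] | [l [[i0 [Hi0 Hl0]] Hl]]].
      *
        have RNe : forall i, (i < m)%nat -> R (fun j => N * ev i j).
        { move=> i Hi; case: (RN i Hi) => r [Rr Er].
          apply: Rext (Ru r Rr) => j Hj.
          case: (Nat.eq_dec j m) => [->|Hjm].
          - rewrite /ev; case: (Nat.eqb_spec m i); [lia|move=> _]; rewrite /d; ring.
          - rewrite -Er //; lia. }
        have Rz : R (fun _ => 0) by apply: Rext (Rscal _ 0 Rr0) => *; ring.
        have Rtr : forall k, (k <= m)%nat -> R (fun j => if Nat.ltb j k then N * r0 j else 0).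
        { elim=> [|k IHk] Hk.
          - by apply: Rext Rz => j _.
          - have := Radd _ _ (IHk ltac:(lia)) (Rscal _ (r0 k) (RNe k ltac:(lia))).
            apply: Rext => j Hj; rewrite /ev.
            case: (Nat.ltb_spec j k); case: (Nat.ltb_spec j (S k)); case: (Nat.eqb_spec j k);
              move=> *; try lia; subst; ring. }
        have RNd : R (fun j => N * d * ev m j).
        { have := Radd _ _ (Rscal _ N Rr0) (Rscal _ (-1) (Rtr m (le_n m))).
          apply: Rext => j Hj; rewrite /ev /d.
          case: (Nat.ltb_spec j m); case: (Nat.eqb_spec j m); move=> *; try lia; subst; ring. }
        left; exists (N * d * d); split; first by have := Z.mul_pos_pos N (d * d) HN; nia.
        move=> i Hi; case: (Nat.eq_dec i m) => [->|Him].
        -- apply: Rext (Rscal _ d RNd) => j _; ring.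
        -- apply: Rext (Rscal _ (d * d) (RNe i ltac:(lia))) => j _; ring.
      * right; exists (fun j => if Nat.ltb j m then d * l j else - dot m l r0).
        split; first by exists i0; split; [lia|]; case: (Nat.ltb_spec i0 m); [nia|lia].
        move=> v Rv /=; rewrite Nat.ltb_irrefl.
        have E1 : dot m (fun j => if Nat.ltb j m then d * l j else - dot m l r0) v = d * dot m l v.
        { transitivity (dot m (fun j => d * l j) v); last exact: dot_scal.
          by apply: dot_extl => j Hj; case: (Nat.ltb_spec j m); lia. }
        rewrite E1.
        have H2 : dot m l (fun i => d * v i + (- v m) * r0 i) = 0.
        { apply: Hl; exists v; split => // i _; ring. }
        rewrite dot_lin in H2; rewrite -H2 /d; ring.
Qed.

Lemma closedR_of m (R : (nat -> Z) -> Prop) :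
  (forall v w, R v -> R w -> R (fun i => v i + w i)) ->
  (forall v, R v -> R (fun i => - v i)) ->
  R (fun _ => 0) ->
  (forall v w, (forall i, (i < m)%nat -> v i = w i) -> R v -> R w) ->
  closedR m R.
Proof.
  move=> Radd Ropp R0 Rext; split; [exact: Radd | split; last exact: Rext].
  move=> v z Rv; elim/Z.peano_ind: z.
  - by apply: Rext R0 => i _.
  - move=> z IH; have := Radd _ _ IH Rv; apply: Rext => i _; rewrite /Z.succ; ring.
  - move=> z IH; have := Radd _ _ IH (Ropp _ Rv); apply: Rext => i _; rewrite /Z.pred; ring.
Qed.

Lemma R_Nall m (R : (nat -> Z) -> Prop) N : closedR m R -> R (fun _ => 0) ->
  (forall i, (i < m)%nat -> R (fun j => N * ev i j)) -> forall q, R (fun j => N * q j).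
Proof.
  move=> [Radd [Rscal Rext]] R0 RN q.
  have : forall k, (k <= m)%nat -> R (fun j => if Nat.ltb j k then N * q j else 0).
  { elim=> [|k IHk] Hk.
    - by apply: Rext R0 => j _.
    - have := Radd _ _ (IHk ltac:(lia)) (Rscal _ (q k) (RN k ltac:(lia))).
      apply: Rext => j Hj; rewrite /ev.
      case: (Nat.ltb_spec j k); case: (Nat.ltb_spec j (S k)); case: (Nat.eqb_spec j k);
        move=> *; try lia; subst; ring. }
  move=> /(_ m (le_n m)); apply: Rext => j Hj.
  case: (Nat.ltb_spec j m) => //; lia.
Qed.

Lemma dot_zerov m l : dot m l (fun _ => 0) = 0.
Proof. elim: m => [|m IH] /=; [ring | rewrite IH; ring]. Qed.

Lemma dot_ev m l i : (i < m)%nat -> dot m l (ev i) = l i.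
Proof.
  elim: m => [|m IH] Hi /=; first lia.
  case: (Nat.eq_dec i m) => [->|Him].
  - have -> : dot m l (ev m) = 0.
    { rewrite (dot_ext _ _ _ (fun _ => 0)) ?dot_zerov //.
      move=> j Hj; rewrite /ev; case: (Nat.eqb_spec j m); lia. }
    rewrite /ev Nat.eqb_refl; ring.
  - have -> : dot m l (ev i) = l i by apply: IH; lia.
    rewrite /ev; case: (Nat.eqb_spec m i); [lia | move=> _; ring].
Qed.

End LAmod.
Import LAmod.

Lemma generated_sub {G : group} (S : G -> Prop) : is_subgroup (generated S).
Proof.
  split; [|split].
  - by move=> K [K1 _] _.
  - move=> x y Hx Hy K HK HS; case: (HK) => _ [KM _]; apply: KM; [exact: Hx | exact: Hy].
  - move=> x Hx K HK HS; case: (HK) => _ [_ KV]; apply: KV; exact: Hx.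
Qed.

Lemma hom_comm {F G : group} (phi : F -> G) (Hphi : is_hom phi) a b :
  phi (commutator a b) = commutator (phi a) (phi b).
Proof. by rewrite /commutator !Hphi !(homV _ Hphi). Qed.

Section Derived.
Context {F : group}.
Definition D := derived F.
Lemma D_sub : is_subgroup D. Proof. exact: generated_sub. Qed.
Lemma D1 : D gone. Proof. by case: D_sub. Qed.
Lemma DM {x y} : D x -> D y -> D (x ** y). Proof. by case: D_sub => _ [M _]; apply: M. Qed.
Lemma DV {x} : D x -> D (ginv x). Proof. by case: D_sub => _ [_ V]; apply: V. Qed.
Lemma Dcomm a b : D (commutator a b).
Proof. move=> K HK HS; apply: HS; by exists a, b. Qed.
Lemma Dconj x y : D x -> D (conjg y x).
Proof.
  move=> Dx; pose P z := forall y, D (conjg y z).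
  suff : P x by apply.
  apply: (Dx P).
  - split; [|split].
    + move=> y'; rewrite /conjg mulr1 mulVr; exact: D1.
    + move=> a b Pa Pb y'; rewrite (conj_hom y'); exact: DM.
    + move=> a Pa y'; rewrite (homV _ (conj_hom y')); exact: DV.
  - move=> c [a [b ->]] y'; rewrite (hom_comm _ (conj_hom y')); exact: Dcomm.
Qed.

Definition cg (x y : F) := D (ginv x ** y).
Lemma cg_refl x : cg x x. Proof. rewrite /cg gmulVl; exact: D1. Qed.
Lemma cg_sym {x y} : cg x y -> cg y x.
Proof. by rewrite /cg => /DV; rewrite invM invK. Qed.
Lemma cg_trans {x y z} : cg x y -> cg y z -> cg x z.
Proof. rewrite /cg => A B; have := DM A B; by rewrite -gmulA mulKr. Qed.
Lemma cg_mul {x x' y y'} : cg x x' -> cg y y' -> cg (x ** y) (x' ** y').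
Proof.
  rewrite /cg => A B.
  have := DM (Dconj _ (ginv y) A) B.
  by rewrite /conjg invK invM !gmulA mulKVr.
Qed.
Lemma cg_inv {x x'} : cg x x' -> cg (ginv x) (ginv x').
Proof.
  rewrite /cg invK => A; have := Dconj _ x (DV A).
  by rewrite /conjg invM invK !gmulA mulKVr.
Qed.
Lemma cg_comm x y : cg (x ** y) (y ** x).
Proof. rewrite /cg invM !gmulA; exact: Dcomm. Qed.
Lemma cg_D {x y} : D x -> cg x y -> D y.
Proof. rewrite /cg => A B; have := DM A B; by rewrite mulKr. Qed.
Lemma cg_D1 {y} : cg gone y -> D y.
Proof. by rewrite /cg inv1 gmul1l. Qed.
Lemma D_cg1 {y} : D y -> cg y gone.
Proof. move=> Dy; rewrite /cg mulr1; exact: DV. Qed.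
End Derived.

Section Spow.
Context {F : group} (s : list F).
Definition si (i : nat) : F := nth i s gone.
Fixpoint spow (k : nat) (v : nat -> Z) : F :=
  match k with O => gone | S k => spow k v ** gpow (si k) (v k) end.

Lemma spow_ext k v w : (forall i, (i < k)%nat -> v i = w i) -> spow k v = spow k w.
Proof. elim: k => [|k IH] E //=; rewrite IH ?E //; move=> *; apply: E; lia. Qed.

Lemma spow_zero k : spow k (fun _ => 0%Z) = gone.
Proof. by elim: k => [|k IH] //=; rewrite IH gpow0 mulr1. Qed.

Lemma spow_add k v w : cg (spow k v ** spow k w) (spow k (fun i => v i + w i)%Z).
Proof.
  elim: k => [|k IH] /=; first by rewrite mulr1; apply: cg_refl.
  rewrite gpow_add.
  apply: (@cg_trans _ _ (spow k v ** (spow k w ** gpow (si k) (v k)) ** gpow (si k) (w k))).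
  - rewrite !gmulA -(gmulA (spow k v)).
    apply: cg_mul; last exact: cg_refl.
    rewrite -!gmulA; apply: cg_mul; first exact: cg_refl.
    exact: cg_comm.
  - rewrite !gmulA; apply: cg_mul; last exact: cg_refl.
    apply: cg_mul; [exact: IH | exact: cg_refl].
Qed.

Lemma spow_opp k v : cg (ginv (spow k v)) (spow k (fun i => - v i)%Z).
Proof.
  elim: k => [|k IH] /=; first by rewrite inv1; apply: cg_refl.
  rewrite invM gpow_opp; apply: cg_trans (cg_comm _ _) _.
  apply: cg_mul; [exact: IH | exact: cg_refl].
Qed.

Lemma spow_ev k i : spow k (ev i) = if Nat.ltb i k then si i else gone.
Proof.
  elim: k => [|k IH] /=; first by [].
  rewrite IH /ev.
  case: (Nat.ltb_spec i k); case: (Nat.ltb_spec i (S k)); case: (Nat.eqb_spec k i) => Hki Hi1 Hi2;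
    try lia.
  - by rewrite gpow0 mulr1.
  - by subst; rewrite gpow1 gmul1l.
  - by rewrite gpow0 mulr1.
Qed.
End Spow.

Definition upd (v : nat -> Z) (k : nat) (a : Z) : nat -> Z :=
  fun j => if Nat.eqb j k then a else v j.
Definition range (N : Z) : list Z := map Z.of_nat (seq 0 (Z.to_nat N)).
Fixpoint vecs (N : Z) (k : nat) : list (nat -> Z) :=
  match k with
  | O => (fun _ => 0%Z) :: nil
  | S k => flat_map (fun v => map (fun a => upd v k a) (range N)) (vecs N k)
  end.

Lemma vecs_spec N k r : (forall i, (i < k)%nat -> (0 <= r i < N)%Z) ->
  exists u, In u (vecs N k) /\ forall i, (i < k)%nat -> u i = r i.
Proof.
  elim: k => [|k IH] Hr.
  - exists (fun _ => 0%Z); split; [by left | move=> i Hi; lia].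
  - case: IH => [i Hi|u [Hu Eu]]; first by apply: Hr; lia.
    exists (upd u k (r k)); split.
    + apply/in_flat_map; exists u; split => //.
      apply/in_map_iff; exists (r k); split => //.
      apply/in_map_iff; exists (Z.to_nat (r k)); split.
      * have := Hr k (Nat.lt_succ_diag_r k); lia.
      * apply/in_seq; have := Hr k (Nat.lt_succ_diag_r k); lia.
    + move=> i Hi; rewrite /upd; case: (Nat.eqb_spec i k) => [->//|Hik].
      apply: Eu; lia.
Qed.

Section Abel.
Context {F : group} (s : list F) (gen : forall x : F, generated (fun y => In y s) x).

Definition RR (v : nat -> Z) := D (spow s (length s) v).

Lemma RR_closed : closedR (length s) RR.
Proof.
  apply: closedR_of.
  - move=> v w Rv Rw; apply: cg_D (spow_add _ _ _ _); exact: DM.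
  - move=> v Rv; apply: cg_D (spow_opp _ _ _); exact: DV.
  - by rewrite /RR spow_zero; apply: D1.
  - move=> v w E; by rewrite /RR (spow_ext _ _ _ _ E).
Qed.

Lemma RR0 : RR (fun _ => 0%Z).
Proof. by rewrite /RR spow_zero; apply: D1. Qed.

Lemma span x : exists v, cg x (spow s (length s) v).
Proof.
  apply: (gen x (fun x => exists v, cg x (spow s (length s) v))).
  - split; [|split].
    + exists (fun _ => 0%Z); rewrite spow_zero; exact: cg_refl.
    + move=> a b [v Ha] [w Hb]; exists (fun i => v i + w i)%Z.
      exact: cg_trans (cg_mul Ha Hb) (spow_add _ _ _ _).
    + move=> a [v Ha]; exists (fun i => - v i)%Z.
      exact: cg_trans (cg_inv Ha) (spow_opp _ _ _).
  - move=> y Hy; case: (In_nth _ _ gone Hy) => n [Hn En].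
    exists (ev n); rewrite spow_ev.
    case: (Nat.ltb_spec n (length s)) => Hn'; last lia.
    rewrite /si En; exact: cg_refl.
Qed.

Lemma cg_mulD (a d : F) : D d -> cg (a ** d) a.
Proof. move=> Dd; rewrite /cg invM -gmulA gmulVl mulr1; exact: DV. Qed.

Lemma fin_case N : (0 < N)%Z -> (forall i, (i < length s)%nat -> RR (fun j => N * ev i j)%Z) ->
  finite_index (@D F).
Proof.
  move=> HN RN.
  exists (map (spow s (length s)) (vecs N (length s))) => x.
  case: (span x) => v Hv.
  pose r := fun j => (v j mod N)%Z.
  pose q := fun j => (v j / N)%Z.
  have Dq : RR (fun j => N * q j)%Z := R_Nall _ _ _ RR_closed RR0 RN q.
  have Ev : spow s (length s) v = spow s (length s) (fun j => r j + N * q j)%Z.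
    by apply: spow_ext => i _; rewrite /r /q; have := Z_div_mod_eq_full (v i) N; lia.
  have Hr : cg x (spow s (length s) r).
    apply: cg_trans Hv _; rewrite Ev.
    apply: cg_trans (cg_sym (spow_add _ _ _ _)) _.
    exact: cg_mulD.
  case: (vecs_spec N (length s) r) => [i _|u [Hu Eu]].
    by rewrite /r; apply: Z.mod_pos_bound.
  exists (spow s (length s) u); split; first by apply/in_map_iff; exists u.
  rewrite (spow_ext _ _ _ _ Eu); exact: (cg_sym Hr).
Qed.
End Abel.

Section EpsB.
Context {F : group} (s : list F) (gen : forall x : F, generated (fun y => In y s) x)
  (l : nat -> Z) (Hl : forall v, RR s v -> dot (length s) l v = 0%Z).

Definition vec (x : F) : nat -> Z :=
  epsilon (inhabits (fun _ => 0%Z)) (fun v => cg x (spow s (length s) v)).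
Lemma vec_spec x : cg x (spow s (length s) (vec x)).
Proof.
  apply: (epsilon_spec (inhabits (fun _ => 0%Z)) (fun v => cg x (spow s (length s) v))).
  exact: span.
Qed.

Lemma dot_eq x v w : cg x (spow s (length s) v) -> cg x (spow s (length s) w) ->
  dot (length s) l v = dot (length s) l w.
Proof.
  move=> Hv Hw.
  have Hvw := cg_trans (cg_sym Hv) Hw.
  have R1 : RR s (fun i => - v i + w i)%Z.
  { rewrite /RR; apply: (cg_D Hvw).
    apply: cg_trans (cg_mul (spow_opp _ _ _) (cg_refl _)) (spow_add _ _ _ _). }
  have := Hl _ R1.
  rewrite (dot_ext _ _ _ (fun i => (-1) * v i + 1 * w i)%Z); first by move=> *; ring.
  rewrite dot_lin; lia.
Qed.

Definition e0 (x : F) := dot (length s) l (vec x).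
Lemma e0_spec x v : cg x (spow s (length s) v) -> e0 x = dot (length s) l v.
Proof. move=> Hv; exact: dot_eq (vec_spec x) Hv. Qed.

Lemma e0_hom x y : e0 (x ** y) = (e0 x + e0 y)%Z.
Proof.
  rewrite (e0_spec (x ** y) (fun i => vec x i + vec y i)%Z).
  - exact: cg_trans (cg_mul (vec_spec x) (vec_spec y)) (spow_add _ _ _ _).
  - rewrite (dot_ext _ _ _ (fun i => 1 * vec x i + 1 * vec y i)%Z); first by move=> *; ring.
    rewrite dot_lin /e0; ring.
Qed.

Lemma e0_si i : (i < length s)%nat -> e0 (si s i) = l i.
Proof.
  move=> Hi; rewrite (e0_spec _ (ev i)) ?dot_ev //.
  rewrite spow_ev; case: (Nat.ltb_spec i (length s)) => Hi'; [exact: cg_refl|lia].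
Qed.
End EpsB.

Lemma min_exists (P : nat -> Prop) n : P n -> exists n0, P n0 /\ forall k, P k -> (n0 <= k)%nat.
Proof.
  elim/(well_founded_induction lt_wf): n => n IH Pn.
  case: (classic (exists k, P k /\ (k < n)%nat)) => [[k [Pk Hk]]|Hno].
  - exact: IH Hk Pk.
  - exists n; split => // k Pk; case: (Nat.le_gt_cases n k) => // Hk.
    exfalso; apply: Hno; by exists k.
Qed.

Lemma normalize {F : group} (e : F -> Z) (He : forall x y, e (x ** y) = (e x + e y)%Z)
  (x0 : F) : e x0 <> 0%Z ->
  exists eps : F -> Z, (forall x y, eps (x ** y) = (eps x + eps y)%Z) /\ exists t, eps t = 1%Z.
Proof.
  move=> Hx0.
  pose P n := (0 < n)%nat /\ exists x, e x = Z.of_nat n.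
  have Pex : P (Z.to_nat (Z.abs (e x0))).
  { split; first lia.
    case: (Z.leb_spec 0 (e x0)) => Hs.
    - exists x0; lia.
    - exists (ginv x0); rewrite (epsV He); lia. }
  case: (min_exists P _ Pex) => n0 [[Hn0 [t0 Et0]] Hmin].
  set d := Z.of_nat n0.
  have Hdn : d = Z.of_nat n0 by [].
  have Hd : (0 < d)%Z by rewrite /d; lia.
  have Hmod : forall x, (e x mod d = 0)%Z.
  { move=> x; have Hb := Z.mod_pos_bound (e x) d Hd.
    case: (Z.eq_dec (e x mod d) 0) => // Hr; exfalso.
    have : P (Z.to_nat (e x mod d)).
    { split; first lia.
      exists (x ** gpow t0 (- (e x / d))); rewrite He (eps_gpow He) Et0 -/d.
      have := Z_div_mod_eq_full (e x) d; lia. }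
    move=> /Hmin; lia. }
  exists (fun x => e x / d)%Z; split.
  - move=> x y; rewrite He.
    have Ex := Z_div_mod_eq_full (e x) d; have Ey := Z_div_mod_eq_full (e y) d.
    rewrite Hmod Z.add_0_r in Ex; rewrite Hmod Z.add_0_r in Ey.
    rewrite {1}Ex {1}Ey -Z.mul_add_distr_l Z.mul_comm Z.div_mul //; lia.
  - exists t0; rewrite Et0 -/d Z.div_same //; lia.
Qed.

Lemma exists_eps {F : group} : finitely_generated F -> infinite_index (derived F) ->
  exists eps : F -> Z, (forall x y, eps (x ** y) = (eps x + eps y)%Z) /\ exists t, eps t = 1%Z.
Proof.
  move=> [s gen] Hinf.
  case: (LA (length s) (RR s) (RR_closed s)) => [[N [HN RN]] | [l [[i0 [Hi0 Hl0]] Hl]]].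
  - exfalso; apply: Hinf; exact: (fin_case s gen N HN RN).
  - apply: (normalize (e0 s l) (e0_hom s gen l Hl) (si s i0)).
    by rewrite (e0_si s gen l Hl).
Qed.


Theorem mainTheorem3 (G F : group) (H : G -> Prop) (HH : is_subgroup H)
  (W : F -> Prop) (hF : finitely_generated F)
  (hidx : infinite_index (derived F))
  (g : {w : F | W w} -> G) :
  card_divides {h : G | H h}
    {phi : F -> G | is_hom phi /\
       forall w : {w : F | W w}, in_double_coset H (g w) (phi (proj1_sig w))}.
Proof.
  case: (exists_eps hF hidx) => eps [Heps [t Ht]].
  exact: (card_div_main H HH W g eps Heps t Ht).
Qed.
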